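(* Let $\Omega\subseteq\mathbb R^N$ be a bounded open set and $\alpha\in(0,1)$. For every sequence $(u_i)\subseteq\mathcal X^\alpha(\Omega)$ with $\sup_i\|u_i\|_{\mathcal X^\alpha(\Omega)}<\infty$ there exist $u\in\mathcal X^\alpha(\Omega)$ and a subsequence $(u_{i_j})$ such that $\|u_{i_j}-u\|_{\mathcal Y(\Omega)}\to0$ as $j\to\infty$, i.e. $\|u_{i_j}-u\|^{(1)}_{\mathcal L^1(\Omega)}+\|u_{i_j}-u\|_{L^\infty(\Omega)}\to0$. In particular the inclusion $\mathcal X^\alpha(\Omega)\hookrightarrow\mathcal Y(\Omega)$ is compact.
   Context: $\ell(\rho):=|\ln(\min\{\rho,1/10\})|^{-1}$ ($\rho>0$), $\ell(0):=0$. $d(x):=\operatorname{dist}(x,\partial\Omega)$, $d(x,y):=\min(d(x),d(y))$. For $\alpha,\beta\ge0$ and $u:\Omega\to\mathbb R$: $[u]_{\mathcal L^\alpha(\Omega)}:=\sup_{x\ne y\in\Omega}\frac{|u(x)-u(y)|}{\ell^\alpha(|x-y|)}$, $[u]^{(\beta)}_{\mathcal L^\alpha(\Omega)}:=\sup_{x\neq y\in\Omega}\ell^{\alpha+\beta}(d(x,y))\frac{|u(x)-u(y)|}{\ell^\alpha(|x-y|)}$, $\|u\|^{(\beta)}_{\mathcal L^\alpha(\Omega)}:=\sup_{x\in\Omega}\ell^\beta(d(x))|u(x)|+[u]^{(\beta)}_{\mathcal L^\alpha(\Omega)}$. $\mathcal X^\alpha(\Omega)$ is the space of $u:\mathbb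 R^N\to\mathbb R$ with $u=0$ in $\mathbb R^N\setminus\Omega$ and $\|u\|_{\mathcal X^\alpha(\Omega)}:=\|u\|^{(0)}_{\mathcal L^{1+\alpha}(\Omega)}+[u]_{\mathcal L^\alpha(\mathbb R^N)}<\infty$; $\mathcal Y(\Omega)$ is the space of $f:\Omega\to\mathbb R$ with $\|f\|_{\mathcal Y(\Omega)}:=\|f\|^{(1)}_{\mathcal L^1(\Omega)}+\|f\|_{L^\infty(\Omega)}<\infty$. *)

(* Defs.v *)
From HB Require Import structures.
From mathcomp Require Import all_boot all_order all_algebra.
From mathcomp Require Import all_classical all_reals all_analysis.
Set Implicit Arguments. Unset Strict Implicit. Unset Printing Implicit Defensive.
Import Order.TTheory GRing.Theory Num.Theory.
Import numFieldNormedType.Exports.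
Local Open Scope classical_set_scope.
Local Open Scope ring_scope.

Section Defs.
Variable R : realType.
Variable N : nat.
Notation V := 'rV[R]_N.

Definition enorm (x : V) : R := Num.sqrt (\sum_(i < N) (x ord0 i) ^+ 2).

Definition ell (rho : R) : R :=
  if rho <= 0 then 0 else (`| ln (Num.min rho (10%:R)^-1) |)^-1.

(* d(x) = dist(x, boundary of Omega); for x in Omega (open) this is the
   distance to the complement of Omega. *)
Definition dist_bd (Om : set V) (x : V) : R :=
  inf [set enorm (x - y) | y in ~` Om].

Definition dist_bd2 (Om : set V) (x y : V) : R :=
  Num.min (dist_bd Om x) (dist_bd Om y).

(* supremum of a set of nonnegative extended reals; the empty sup is 0 *)
Definition nsup (S : set (\bar R)) : \bar R := ereal_sup ([set 0%E] `|` S).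

Definition dpairs (A : set V) : set (V * V) :=
  [set xy | A xy.1 /\ A xy.2 /\ xy.1 <> xy.2].

Definition semiL (A : set V) (a : R) (u : V -> R) : \bar R :=
  nsup [set ((`|u xy.1 - u xy.2| / (ell (enorm (xy.1 - xy.2)) `^ a))%:E)
       | xy in dpairs A].

Definition wsemiL (Om : set V) (a b : R) (u : V -> R) : \bar R :=
  nsup [set ((ell (dist_bd2 Om xy.1 xy.2) `^ (a + b)) * `|u xy.1 - u xy.2|
              / (ell (enorm (xy.1 - xy.2)) `^ a))%:E
       | xy in dpairs Om].

Definition wnormL (Om : set V) (a b : R) (u : V -> R) : \bar R :=
  (nsup [set ((ell (dist_bd Om x) `^ b) * `|u x|)%:E | x in Om]
   + wsemiL Om a b u)%E.

(* sup norm on Om (functions here are continuous on Om, so this is the L^oo norm) *)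
Definition supnorm (Om : set V) (u : V -> R) : \bar R :=
  nsup [set (`|u x|)%:E | x in Om].

Definition Xnorm (Om : set V) (a : R) (u : V -> R) : \bar R :=
  (wnormL Om (1 + a) 0 u + semiL setT a u)%E.

Definition inX (Om : set V) (a : R) (u : V -> R) : Prop :=
  (forall x, ~ Om x -> u x = 0) /\ (Xnorm Om a u < +oo)%E.

Definition Ynorm (Om : set V) (f : V -> R) : \bar R :=
  (wnormL Om 1 1 f + supnorm Om f)%E.

End Defs.

(* Main.v *)
Require Import Defs.
From HB Require Import structures.
From mathcomp Require Import all_boot all_order all_algebra.
From mathcomp Require Import all_classical all_reals all_analysis.
From mathcomp Require Import ring lra.
Import Order.TTheory GRing.Theory Num.Theory.
Import numFieldNormedType.Exports.
Local Open Scope classical_set_scope.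
Local Open Scope ring_scope.

Section Ell.
Variable R : realType.

Lemma expR1_lt10 : expR (1:R) < 10%:R.
Proof.
have h : 1 - 2^-1 < expR (- 2^-1 : R).
  have := @expR_gt1Dx R (- 2^-1); rewrite oppr_eq0 invr_eq0 pnatr_eq0 /=.
  by move=> /(_ isT); rewrite -[1 - _]/(1 + - 2^-1).
have e2 : (1:R) = 2^-1 + 2^-1 by field.
have : expR (2^-1 : R) < 2.
  have pq : expR (2^-1 : R) * expR (- 2^-1) = 1 by rewrite -expRD addrN expR0.
  have p0 := expR_gt0 (2^-1 : R).
  have h' : 2^-1 < expR (- 2^-1 : R) by move: h; rewrite {1}e2 addrK.
  nra.
move=> lt2; rewrite e2 expRD.
apply: (@lt_trans _ _ (2 * 2)).
  by apply: ltr_pM => //; exact: ltW (expR_gt0 _).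
lra.
Qed.

Lemma ln10_gt1 : 1 < ln (10%:R : R).
Proof.
rewrite -[X in X < _](expRK 1) ltr_ln ?posrE ?expR_gt0 ?ltr0n //.
exact: expR1_lt10.
Qed.

Lemma ell_ge0 (r : R) : 0 <= ell r.
Proof. by rewrite /ell; case: ifP => // _; rewrite invr_ge0. Qed.

Lemma ell_le1 (r : R) : ell r <= 1.
Proof.
rewrite /ell; case: ifP => // r0.
have m0 : 0 < Num.min r 10%:R^-1 by rewrite lt_min ltNge r0 invr_gt0 ltr0n.
have m1 : Num.min r 10%:R^-1 <= 10%:R^-1 by rewrite ge_min lexx orbT.
have : ln (Num.min r 10%:R^-1) <= - ln 10%:R.
  rewrite -lnV ?posrE ?ltr0n //.
  rewrite ler_ln ?posrE ?invr_gt0 ?ltr0n //.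
have lt : ln (Num.min r 10%:R^-1) < 0 by
  apply: ln_lt0; rewrite m0 /=; apply: le_lt_trans m1 _; rewrite invf_lt1 ?ltr1n ?ltr0n.
rewrite ltr0_norm // => hle.
rewrite invf_le1 ?oppr_gt0 //.
rewrite lerNr; apply: le_trans hle _; rewrite lerN2; exact: ltW ln10_gt1.
Qed.

Let mm (r : R) := Num.min r 10%:R^-1.

Lemma ell_posE (r : R) : 0 < r ->
  [/\ 0 < mm r, ln (mm r) < 0 & ell r = (- ln (mm r))^-1].
Proof.
move=> r0.
have m0 : 0 < mm r by rewrite lt_min r0 invr_gt0 ltr0n.
have m1 : mm r < 1.
  have h1 : mm r <= 10%:R^-1 by rewrite /mm ge_min lexx orbT.
  by apply: le_lt_trans h1 _; rewrite invf_lt1 ?ltr1n ?ltr0n.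
have lt : ln (mm r) < 0 by apply: ln_lt0; rewrite m0.
by split => //; rewrite /ell lt_geF // ltr0_norm.
Qed.

Lemma ell_gt0 (r : R) : 0 < r -> 0 < ell r.
Proof.
by move=> /ell_posE [_ lt ->]; rewrite invr_gt0 oppr_gt0.
Qed.

Lemma ell_mono (r s : R) : 0 < r -> r <= s -> ell r <= ell s.
Proof.
move=> r0 rs; have s0 := lt_le_trans r0 rs.
have [m0 l0 ->] := @ell_posE r r0; have [m0' l0' ->] := @ell_posE s s0.
rewrite lef_pV2 ?posrE ?oppr_gt0 // lerN2 ler_ln ?posrE //.
by rewrite /mm le_min !ge_min lexx orbT rs.
Qed.

Lemma ell_small (s : R) : 0 < s ->
  exists2 d : R, 0 < d & forall r, 0 < r -> r <= d -> ell r <= s.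
Proof.
move=> s0; exists (Num.min (expR (- s^-1)) 10%:R^-1).
  by rewrite lt_min expR_gt0 invr_gt0 ltr0n.
move=> r r0 rd; have [m0 l0 ->] := @ell_posE r r0.
rewrite -[s]invrK lef_pV2 ?posrE ?oppr_gt0 ?invr_gt0 // lerNr.
rewrite -[X in _ <= X]expRK ler_ln ?posrE ?expR_gt0 //.
have h1 : mm r <= r by rewrite /mm ge_min lexx.
apply: le_trans h1 _; apply: le_trans rd _; by rewrite ge_min lexx.
Qed.

Lemma ellpow_small (a eta : R) : 0 < a -> 0 < eta ->
  exists2 d : R, 0 < d & forall r, 0 < r -> r <= d -> ell r `^ a <= eta.
Proof.
move=> a0 e0; have [d d0 hd] := @ell_small _ (powR_gt0 a^-1 e0).
exists d => // r r0 rd.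
have := hd r r0 rd => h.
have -> : eta = (eta `^ a^-1) `^ a by rewrite -powRrM mulVf ?gt_eqF // powRr1 // ltW.
apply: (ge0_ler_powR (ltW a0)) => //; rewrite ?nnegrE ?ell_ge0 ?powR_ge0 //.
Qed.
End Ell.
Arguments ell_ge0 {R}. Arguments ell_le1 {R}. Arguments ell_gt0 {R} [r].
Arguments ell_mono {R} [r s]. Arguments ell_small {R} [s]. Arguments ellpow_small {R} [a eta].

Section Enorm.
Variables (R : realType) (N : nat).
Implicit Types v x y : 'rV[R]_N.

Lemma entry_le_norm v i : `|v ord0 i| <= `|v|.
Proof.
have -> : `|v| = mx_norm v by [].
rewrite mx_normrE.
exact: (le_bigmax _ (fun ij : 'I_1 * 'I_N => `|v ij.1 ij.2|) (ord0, i)).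
Qed.

Lemma enorm_ge0 v : 0 <= enorm v.
Proof. exact: sqrtr_ge0. Qed.

Lemma enorm_gt0 x y : x <> y -> 0 < enorm (x - y).
Proof.
move=> xy; rewrite /enorm sqrtr_gt0.
have [i hi] : exists i, x ord0 i != y ord0 i.
  apply: contra_notP xy => hall; apply/matrixP => j k; rewrite [j]ord1.
  by apply/eqP/negPn/negP => hk; apply: hall; exists k.
rewrite (bigD1 i) //= ltr_wpDr ?sumr_ge0 // => [j _|]; first exact: sqr_ge0.
rewrite !mxE; have hne : x ord0 i - y ord0 i != 0 by rewrite subr_eq0.
by rewrite lt_def sqr_ge0 andbT sqrf_eq0.
Qed.

Lemma enorm_le v : enorm v <= N%:R * `|v|.
Proof.
rewrite /enorm -(@ger0_norm _ (N%:R * `|v|)) ?mulr_ge0 //.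
rewrite -sqrtr_sqr ler_sqrt ?sqr_ge0 //.
apply: (@le_trans _ _ (\sum_(i < N) `|v|^+2)).
  apply: ler_sum => i _; rewrite -real_normK ?num_real //.
  by rewrite lerXn2r ?nnegrE ?entry_le_norm.
rewrite sumr_const card_ord exprMn -[X in X <= _]mulr_natl ler_wpM2r ?sqr_ge0 //.
rewrite -natrX ler_nat; case: (N) => // k.
by rewrite expnS leq_pmulr // expn_gt0.
Qed.
End Enorm.
Arguments enorm_gt0 {R N} [x y]. Arguments enorm_le {R N}. Arguments entry_le_norm {R N}.

Section Nsup.
Variables (R : realType).

Lemma nsup_ge0 (S : set (\bar R)) : (0 <= nsup S)%E.
Proof. by apply: ereal_sup_ubound; left. Qed.

Lemma nsup_ub (S : set (\bar R)) x : S x -> (x <= nsup S)%E.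
Proof. by move=> Sx; apply: ereal_sup_ubound; right. Qed.

Lemma nsup_le (S : set (\bar R)) c : (0 <= c)%E -> (forall x, S x -> x <= c)%E ->
  (nsup S <= c)%E.
Proof. by move=> c0 h; apply/ereal_supP => y [->|/h]. Qed.
End Nsup.

Section Xb.
Variables (R : realType) (N : nat).
Implicit Types (Om : set 'rV[R]_N) (u : 'rV[R]_N -> R).

Lemma Xbounds Om (a M : R) u : (Xnorm Om a u <= M%:E)%E ->
 [/\ forall x, Om x -> `|u x| <= M,
     forall x y, Om x -> Om y -> x <> y ->
       ell (dist_bd2 Om x y) `^ (1 + a) * `|u x - u y| <= M * ell (enorm (x - y)) `^ (1 + a)
   & forall x y, x <> y -> `|u x - u y| <= M * ell (enorm (x - y)) `^ a ].
Proof.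
rewrite /Xnorm /wnormL.
set A := nsup _; set B := wsemiL _ _ _ _; set C := semiL _ _ _ => h.
have hA : (0 <= A)%E by apply: nsup_ge0.
have hB : (0 <= B)%E by apply: nsup_ge0.
have hC : (0 <= C)%E by apply: nsup_ge0.
have hAM : (A <= M%:E)%E by apply: le_trans h; exact: lee_paddr hC (lee_paddr hB (lexx A)).
have hBM : (B <= M%:E)%E by apply: le_trans h; exact: lee_paddr hC (lee_paddl hA (lexx B)).
have hCM : (C <= M%:E)%E by apply: le_trans h; exact: lee_paddl (adde_ge0 hA hB) (lexx C).
split.
- move=> x Ox; rewrite -lee_fin; apply: le_trans hAM; apply: nsup_ub.
  by exists x => //; rewrite powRr0 mul1r.
- move=> x y Ox Oy xy.
  have p0 : 0 < ell (enorm (x - y)) `^ (1 + a) by apply/powR_gt0/ell_gt0/enorm_gt0.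
  rewrite -ler_pdivrMr //; rewrite -lee_fin; apply: le_trans hBM; apply: nsup_ub.
  by exists (x, y) => //=; rewrite addr0.
- move=> x y xy.
  have p0 : 0 < ell (enorm (x - y)) `^ a by apply/powR_gt0/ell_gt0/enorm_gt0.
  rewrite -ler_pdivrMr //; rewrite -lee_fin; apply: le_trans hCM; apply: nsup_ub.
  by exists (x, y).
Qed.

Lemma Xfinite Om (a M : R) u : 0 <= M ->
  (forall x, Om x -> `|u x| <= M) ->
  (forall x y, Om x -> Om y -> x <> y ->
     ell (dist_bd2 Om x y) `^ (1 + a) * `|u x - u y| <= M * ell (enorm (x - y)) `^ (1 + a)) ->
  (forall x y, x <> y -> `|u x - u y| <= M * ell (enorm (x - y)) `^ a) ->
  (Xnorm Om a u < +oo)%E.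
Proof.
move=> M0 h1 h2 h3.
have le : (Xnorm Om a u <= (M + M + M)%:E)%E.
  rewrite /Xnorm /wnormL !EFinD; apply: leeD; first apply: leeD.
  - apply: nsup_le; first by rewrite lee_fin.
    by move=> _ [x Ox <-]; rewrite lee_fin powRr0 mul1r h1.
  - apply: nsup_le; first by rewrite lee_fin.
    move=> _ [[x y] [/= Ox [Oy xy]] <-]; rewrite lee_fin addr0.
    have p0 : 0 < ell (enorm (x - y)) `^ (1 + a) by apply/powR_gt0/ell_gt0/enorm_gt0.
    by rewrite ler_pdivrMr // h2.
  - apply: nsup_le; first by rewrite lee_fin.
    move=> _ [[x y] [/= Ox [Oy xy]] <-]; rewrite lee_fin.
    have p0 : 0 < ell (enorm (x - y)) `^ a by apply/powR_gt0/ell_gt0/enorm_gt0.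
    by rewrite ler_pdivrMr // h3.
by apply: le_lt_trans le _; rewrite ltry.
Qed.
End Xb.
Arguments Xbounds {R N} [Om a M u]. Arguments Xfinite {R N} [Om a M u].

Section Yb.
Variables (R : realType) (N : nat).
Implicit Types (Om : set 'rV[R]_N) (f : 'rV[R]_N -> R).

Lemma Ynorm_ge0 Om f : (0 <= Ynorm Om f)%E.
Proof. by rewrite /Ynorm /wnormL !adde_ge0 // nsup_ge0. Qed.

Lemma Ybound Om f (eps t : R) : 0 <= eps -> 0 <= t ->
  (forall x, Om x -> `|f x| <= eps) ->
  (forall x y, Om x -> Om y -> x <> y ->
     ell (dist_bd2 Om x y) `^ (1 + 1) * `|f x - f y| / ell (enorm (x - y)) `^ 1 <= t) ->
  (Ynorm Om f <= (eps + t + eps)%:E)%E.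
Proof.
move=> e0 t0 h1 h2; rewrite /Ynorm /wnormL !EFinD; apply: leeD; first apply: leeD.
- apply: nsup_le; first by rewrite lee_fin.
  move=> _ [x Ox <-]; rewrite lee_fin powRr1 ?ell_ge0 //.
  rewrite -[eps]mul1r; apply: ler_pM => //; [exact: ell_ge0|exact: ell_le1|exact: h1].
- apply: nsup_le; first by rewrite lee_fin.
  by move=> _ [[x y] [/= Ox [Oy xy]] <-]; rewrite lee_fin h2.
- apply: nsup_le; first by rewrite lee_fin.
  by move=> _ [x Ox <-]; rewrite lee_fin h1.
Qed.

Lemma mid_est Om (a K e : R) : 0 < a -> a <= 1 -> 0 < e -> 0 <= K ->
  exists2 c : R, 0 < c & forall f (eps : R), 0 <= eps -> eps <= c ->
   (forall x, Om x -> `|f x| <= eps) ->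
   (forall x y, Om x -> Om y -> x <> y ->
      ell (dist_bd2 Om x y) `^ (1 + a) * `|f x - f y| <= K * ell (enorm (x - y)) `^ (1 + a)) ->
   forall x y, Om x -> Om y -> x <> y ->
     ell (dist_bd2 Om x y) `^ (1 + 1) * `|f x - f y| / ell (enorm (x - y)) `^ 1 <= e.
Proof.
move=> a0 a1 e0 K0.
have [d d0 hd] := ellpow_small a0 (divr_gt0 e0 (ltr_wpDl K0 ltr01)).
have ld0 : 0 < ell d by exact: ell_gt0.
exists (e * ell d / 2); first by rewrite !mulr_gt0.
move=> f eps eps0 epsc h1 h2 x y Ox Oy xy.
have r0 : 0 < enorm (x - y) := enorm_gt0 xy.
set r := enorm (x - y) in r0 *.
have l0 : 0 < ell r := ell_gt0 r0.
have l0' : 0 <= ell r := ltW l0.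
set D := ell (dist_bd2 Om x y).
have D0 : 0 <= D := ell_ge0 _.
have D1 : D <= 1 := ell_le1 _.
have Df : `|f x - f y| <= 2 * eps.
  by apply: le_trans (ler_normB _ _) _; rewrite mulr2n mulrDl mul1r lerD ?h1.
rewrite powRr1; last exact: ltW.
have -> : D `^ (1 + 1) = D ^+ 2 by rewrite -powR_mulrn.
have Df0 := normr_ge0 (f x - f y).
case: (leP r d) => [rd|dr].
- have hp := hd r r0 rd.
  have hD : D ^+ 2 <= D `^ (1 + a).
    have [->|Dp] := eqVneq D 0.
      by rewrite expr0n /= powR_ge0.
    have Dp' : 0 < D by rewrite lt_def Dp D0.
    rewrite -powR_mulrn //; apply: ger_powR; first by rewrite Dp' D1.
    lra.
  have h2' := h2 x y Ox Oy xy.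
  have hl : ell r `^ (1 + a) = ell r * ell r `^ a.
    rewrite powRD; last by rewrite gt_eqF // ltr_wpDr // ltW.
    by rewrite powRr1 // ltW.
  rewrite hl in h2'.
  have lpa := powR_ge0 (ell r) a.
  rewrite ler_pdivrMr //.
  apply: (le_trans (ler_wpM2r Df0 hD)); apply: (le_trans h2').
  rewrite mulrA [_ * ell r]mulrC -!mulrA mulrC ler_wpM2r //.
  apply: (le_trans (ler_wpM2l K0 hp)).
  rewrite mulrA ler_pdivrMr ?(ltr_wpDl K0 ltr01) //; nra.
- have ld : ell d <= ell r := ell_mono d0 (ltW dr).
  rewrite ler_pdivrMr //.
  have hD2 : D ^+ 2 <= 1 by rewrite expr_le1.
  apply: (@le_trans _ _ (2 * eps)).
    by rewrite -[X in _ <= X]mul1r; apply: ler_pM => //; rewrite sqr_ge0.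
  apply: (@le_trans _ _ (e * ell d)); last by rewrite ler_pM2l.
  move: epsc; rewrite ler_pdivlMr //; lra.
Qed.
End Yb.
Arguments Ybound {R N} [Om f eps t]. Arguments mid_est {R N} Om [a K e]. Arguments Ynorm_ge0 {R N}.

Section LC.
Variables (R : realType) (n : nat).

Lemma rV_hausdorff : hausdorff_space 'rV[R]_n.+1.
Proof. exact: norm_hausdorff. Qed.

Lemma box_compact (c r : 'I_n.+1 -> R) :
  compact [set v : 'rV[R]_n.+1 | forall i, [set` `[c i - r i, c i + r i]] (v ord0 i)].
Proof. apply: (@rV_compact _ _ (fun i => [set` `[c i - r i, c i + r i]])) => i; exact: segment_compact. Qed.

Lemma rV_locally_compact : locally_compact [set: 'rV[R]_n.+1].
Proof.
move=> x _.
exists [set v : 'rV[R]_n.+1 | forall i, [set` `[x ord0 i - 1, x ord0 i + 1]] (v ord0 i)].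
  rewrite withinET; apply/nbhs_ballP; exists 1 => //= v.
  rewrite -ball_normE /= => hv i; rewrite /= in_itv /=.
  have := le_lt_trans (entry_le_norm (x - v) i) hv; rewrite !mxE => h.
  have := ler_norm (x ord0 i - v ord0 i); have := ler_normr (x ord0 i - v ord0 i).
  move: h; rewrite ltr_norml => /andP[h1 h2] _ _.
  apply/andP; split; lra.
split; first exact: (box_compact (fun i => x ord0 i) (fun=> 1)).
apply: compact_closed; first exact: rV_hausdorff.
exact: (box_compact (fun i => x ord0 i) (fun=> 1)).
Qed.
End LC.

Section Extract.
Variables (R : realType) (n : nat).
Local Notation X := 'rV[R]_n.+1.

Lemma extract (u_ : nat -> X -> R) (K0 : set X) (M a : R) :
  compact K0 -> 0 < a ->
  (forall i x, `|u_ i x| <= M) ->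
  (forall i x y, x <> y -> `|u_ i x - u_ i y| <= M * ell (enorm (x - y)) `^ a) ->
  exists (f : X -> R) (phi : nat -> nat),
    (forall k, (phi k < phi k.+1)%N) /\
    forall k x, K0 x -> `|f x - u_ (phi k) x| < k.+1%:R^-1.
Proof.
move=> cK a0 hM hH.
have M0 : 0 <= M by apply: le_trans (hM 0%N 0) .
pose W : set {family compact, X -> R} := [set g | exists i, g = u_ i].
have ptw : pointwise_precompact W id.
  move=> x; apply: (@precompact_subset _ _ [set` `[- M, M]]).
    by move=> _ [g [i ->] <-]; rewrite /= in_itv /= -ler_norml.
  by apply: compact_precompact; [exact: Rhausdorff|exact: segment_compact].
have eqc : equicontinuous W id.
  move=> x E; rewrite -entourage_from_ballE => -[e /= e0 heE].
  have [d d0 hd] := ellpow_small a0 (divr_gt0 e0 (ltr_wpDl M0 ltr01)).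
  apply/nbhs_ballP; exists (d / n.+1%:R); first by apply: divr_gt0.
  move=> y; rewrite -ball_normE /= => hxy g [i ->]; apply: heE => /=.
  rewrite -ball_normE /=.
  have [<-|nxy] := eqVneq x y; first by rewrite subrr normr0.
  have nxy' : x <> y by apply/eqP.
  apply: le_lt_trans (hH i x y nxy') _.
  have r0 := enorm_gt0 nxy'.
  have rd : enorm (x - y) <= d.
    apply: le_trans (enorm_le _) _.
    by rewrite mulrC -ler_pdivlMr ?ltr0n // ltW.
  have h := hd _ r0 rd.
  apply: le_lt_trans (ler_wpM2l M0 h) _.
  rewrite mulrA ltr_pdivrMr ?(ltr_wpDl M0 ltr01) //; nra.
have [_ pc] := (@Ascoli X R (@Rhausdorff R) W (@rV_locally_compact R n)).1 (conj ptw eqc).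
rewrite precompactE in pc.
pose F := fmap (fun i => (u_ i : {family compact, X -> R})) (\oo : set_system nat).
have FW : F (closure W) by exists 0%N => // i _; apply: subset_closure; exists i.
have [f [_ clf]] := pc F _ FW.
have pick : forall k n0 : nat, {i : nat | (n0 <= i)%N /\
    forall y, K0 y -> `|f y - u_ i y| < k.+1%:R^-1}.
  move=> k n0; apply: cid.
  have eps0 : 0 < k.+1%:R^-1 :> R by rewrite invr_gt0 ltr0n.
  have Q := fam_nbhs f (entourage_ball _ (PosNum eps0)) cK.
  have P : F [set g | exists2 i, (n0 <= i)%N & g = u_ i].
    by exists n0 => // i /= hi; exists i.
  have [g [[i hi ->] hg]] := clf _ _ P Q.
  exists i; split => // y Ky; have := hg y Ky; by rewrite -ball_normE.
pose phi := fix phi k := match k with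
  | 0%N => proj1_sig (pick 0%N 0%N)
  | k'.+1 => proj1_sig (pick k'.+1 (phi k').+1) end.
exists f, phi; split.
- by move=> k /=; case: (pick k.+1 (phi k).+1) => i [].
- by case=> [|k] x Kx /=; [case: (pick 0%N 0%N) => i [_ ->]|case: (pick k.+1 _) => i [_ ->]].
Qed.
End Extract.
Arguments extract {R n} [u_ K0 M a]. Arguments box_compact {R n}.

Section Misc.
Variable R : realType.

Lemma small_inv (c : R) : 0 < c -> exists k0 : nat, forall k, (k0 <= k)%N -> k.+1%:R^-1 <= c.
Proof.
move=> c0; exists (Num.truncn (c^-1)) => k hk.
rewrite -[c]invrK lef_pV2 ?posrE ?invr_gt0 ?ltr0n //.
apply: ltW; apply: lt_le_trans (truncnS_gt _) _ .
by rewrite ler_nat ltnS.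
Qed.

Lemma lim_le (p q c : R) : 0 <= c -> (forall k : nat, p <= q + c * k.+1%:R^-1) -> p <= q.
Proof.
move=> c0 h; apply/ler_addgt0Pr => e e0.
have [k0 hk] := @small_inv _ (divr_gt0 e0 (ltr_wpDl c0 ltr01)).
apply: le_trans (h k0) _; rewrite lerD2l.
have := hk k0 (leqnn _); rewrite ler_pdivlMr ?(ltr_wpDl c0 ltr01) // => hh.
have hi : 0 <= k0.+1%:R^-1 :> R by rewrite invr_ge0.
apply: le_trans hh; rewrite mulrC ler_wpM2l //. lra.
Qed.

Lemma tri4 (x y z w : R) : `|x - y| <= `|z - w| + `|x - z| + `|w - y|.
Proof.
have -> : x - y = (z - w) + (x - z) + (w - y) by ring.
by apply: le_trans (ler_normD _ _) _; rewrite lerD2r ler_normD.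
Qed.

Lemma ellpow_le1 (r p : R) : 0 <= p -> ell r `^ p <= 1.
Proof.
move=> p0; have [->|h] := eqVneq (ell r) 0.
  have [->|pn] := eqVneq p 0; first by rewrite powRr0.
  by rewrite powR0 // ler01.
have l0 : 0 < ell r by rewrite lt_def h ell_ge0.
rewrite -[X in _ <= X](powRr0 (ell r)); apply: ger_powR => //.
by rewrite l0 ell_le1.
Qed.
End Misc.
Arguments small_inv {R} [c]. Arguments lim_le {R} [p q c].
Arguments tri4 {R}. Arguments ellpow_le1 {R}.

Theorem lemma7p4 (R : realType) (N : nat) (Om : set 'rV[R]_N) (a : R)
    (u_ : nat -> 'rV[R]_N -> R) :
  (0 < N)%N -> open Om -> bounded_set Om -> 0 < a < 1 ->
  (forall i, inX Om a (u_ i)) ->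
  (exists M : R, forall i, (Xnorm Om a (u_ i) <= M%:E)%E) ->
  exists (u : 'rV[R]_N -> R) (phi : nat -> nat),
    [/\ inX Om a u,
        {homo phi : m n / (m < n)%N >-> (m < n)%N} &
        (fun j => Ynorm Om (fun x => u_ (phi j) x - u x)) @ \oo --> 0%E].
Proof.
case: N Om u_ => [|n] Om u_ hN; first by [].
move=> _ bOm /andP[a0 a1] hX [M hM].
have M0 : 0 <= M.
  rewrite -lee_fin; apply: le_trans (hM 0%N).
  by rewrite /Xnorm /wnormL !adde_ge0 // nsup_ge0.
have B1 i x : Om x -> `|u_ i x| <= M by have [] := Xbounds (hM i); auto.
have B2 i x y : Om x -> Om y -> x <> y ->
    ell (dist_bd2 Om x y) `^ (1 + a) * `|u_ i x - u_ i y| <= M * ell (enorm (x - y)) `^ (1 + a).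
  by have [] := Xbounds (hM i); auto.
have B3 i x y : x <> y -> `|u_ i x - u_ i y| <= M * ell (enorm (x - y)) `^ a.
  by have [] := Xbounds (hM i); auto.
have Bg i x : `|u_ i x| <= M.
  have [Ox|nOx] := pselect (Om x); first exact: B1.
  by rewrite (hX i).1 // normr0.
have [B [_ hB]] := bOm.
pose B' := `|B| + 1.
have hB' : Om `<=` [set x | `|x| <= B'].
  by apply: hB; rewrite /B' (le_lt_trans (ler_norm B)) // ltrDl.
pose K0 := [set v : 'rV[R]_n.+1 | forall i, [set` `[(fun=> 0) i - (fun=> B') i, (fun=> 0) i + (fun=> B') i]] (v ord0 i)].
have cK : compact K0 by exact: box_compact.
have OK : Om `<=` K0.
  move=> x Ox i; rewrite /= in_itv /= sub0r add0r -ler_norml.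
  exact: le_trans (entry_le_norm x i) (hB' x Ox).
have [f [phi [hphi hconv]]] := extract cK a0 Bg B3.
pose u x := if asbool (Om x) then f x else 0.
have conv k x : `|u_ (phi k) x - u x| <= k.+1%:R^-1.
  rewrite /u; case: asboolP => Ox.
    by rewrite distrC; apply: ltW; apply: hconv; apply: OK.
  by rewrite (hX _).1 // subrr normr0 invr_ge0.
have U1 x : Om x -> `|u x| <= M.
  move=> Ox; apply: (lim_le ler01) => k.
  have c := conv k x; have b := B1 (phi k) x Ox.
  have h := ler_normD (u x - u_ (phi k) x) (u_ (phi k) x).
  rewrite subrK distrC in h.
  set i := k.+1%:R^-1 in c *; lra.
have U2 x y : Om x -> Om y -> x <> y ->
    ell (dist_bd2 Om x y) `^ (1 + a) * `|u x - u y| <= M * ell (enorm (x - y)) `^ (1 + a).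
  move=> Ox Oy xy; apply: (@lim_le _ _ _ 2) => // k.
  set D := ell (dist_bd2 Om x y) `^ (1 + a).
  have D0 : 0 <= D by apply: powR_ge0.
  have D1 : D <= 1 by apply: ellpow_le1; lra.
  have hT := tri4 (u x) (u y) (u_ (phi k) x) (u_ (phi k) y).
  have c1 := conv k x; have c2 := conv k y; rewrite distrC in c1.
  have hb := B2 (phi k) x y Ox Oy xy.
  have i0 : 0 <= k.+1%:R^-1 :> R by rewrite invr_ge0.
  have e1 := ler_wpM2l D0 hT.
  have e2 : D * `|u x - u_ (phi k) x| <= 1 * k.+1%:R^-1 by apply: ler_pM.
  have e3 : D * `|u_ (phi k) y - u y| <= 1 * k.+1%:R^-1 by apply: ler_pM.
  rewrite !mulrDr in e1; rewrite -/D in hb; set i := k.+1%:R^-1 in c1 c2 e2 e3 i0 *; lra.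
have U3 x y : x <> y -> `|u x - u y| <= M * ell (enorm (x - y)) `^ a.
  move=> xy; apply: (@lim_le _ _ _ 2) => // k.
  have hT := tri4 (u x) (u y) (u_ (phi k) x) (u_ (phi k) y).
  have c1 := conv k x; have c2 := conv k y; rewrite distrC in c1.
  have hb := B3 (phi k) x y xy.
  set i := k.+1%:R^-1 in c1 c2 *; lra.
exists u, phi; split.
- split; last exact: Xfinite M0 U1 U2 U3.
  by move=> x nOx; rewrite /u; case: asboolP.
- by apply: homo_ltn => //; exact: ltn_trans.
have Fbound e : 0 < e -> \forall j \near \oo,
    (Ynorm Om (fun x => (u_ (phi j) x - u x)%R) <= e%:E)%E.
  move=> e0.
  have e3 : 0 < e / 3%:R by rewrite divr_gt0.
  have [c c0 hc] := mid_est Om a0 (ltW a1) e3 (addr_ge0 M0 M0).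
  have m0 : 0 < Num.min c (e / 3%:R) by rewrite lt_min c0 e3.
  have [k0 hk0] := small_inv m0.
  exists k0 => // j /= hj.
  have hj' := hk0 j hj; rewrite le_min in hj'; case/andP: hj' => hjc hje.
  have i0 : 0 <= j.+1%:R^-1 :> R by rewrite invr_ge0.
  apply: le_trans (Ybound i0 (ltW e3) _ _) _.
  - by move=> x _; exact: conv.
  - move=> x0 y0 Ox0 Oy0 xy0; apply: (hc (fun x => u_ (phi j) x - u x) _ i0 hjc _ _ x0 y0 Ox0 Oy0 xy0).
      by move=> x _; exact: conv.
    move=> x y Ox Oy xy.
    set D := ell (dist_bd2 Om x y) `^ (1 + a).
    have D0 : 0 <= D by apply: powR_ge0.
    have hT : `|u_ (phi j) x - u x - (u_ (phi j) y - u y)| <=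
        `|u_ (phi j) x - u_ (phi j) y| + `|u x - u y|.
      have -> : u_ (phi j) x - u x - (u_ (phi j) y - u y) =
          (u_ (phi j) x - u_ (phi j) y) + - (u x - u y) by ring.
      by apply: le_trans (ler_normD _ _) _; rewrite normrN.
    have e1 := ler_wpM2l D0 hT.
    have h1 := B2 (phi j) x y Ox Oy xy; have h2 := U2 x y Ox Oy xy.
    rewrite -/D in h1 h2; rewrite mulrDr in e1; rewrite mulrDl; apply: le_trans e1 _; exact: lerD.
  - rewrite lee_fin; set i := j.+1%:R^-1 in hje *; lra.
apply: cvg_EFin.
  apply: filterS (Fbound 1 ltr01) => j hj.
  by rewrite ge0_fin_numE ?Ynorm_ge0 // (le_lt_trans hj) ?ltry.
apply/cvgr0Pnorm_le => e e0.
apply: filterS (Fbound e e0) => j hj /=.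
have g0 := Ynorm_ge0 Om (fun x => u_ (phi j) x - u x).
have fj : Ynorm Om (fun x => u_ (phi j) x - u x) \is a fin_num.
  by rewrite ge0_fin_numE // (le_lt_trans hj) ?ltry.
rewrite ger0_norm ?fine_ge0 //.
by rewrite -lee_fin fineK.
Qed.
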